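(* Let $k\in\{-1,0,1\}$, $\beta>0$, let $\delta_k>0$ be the positive real solution of $\delta^3+k\delta-\frac{3\beta}{2}=0$, and let $R_b>0$ (with $R_b<1$ if $k=1$). Define \[ R_{\mathrm{AH}}=\frac{1}{\sqrt{\delta_k^2+k}},\quad C_k=\frac{1}{\sqrt{1-kR_b^2}+\delta_kR_b},\quad x_\Sigma=\frac{R_b\delta_k}{C_k},\quad \lambda_1=\frac{\beta R_b^3}{C_k},\quad \lambda_2=\frac{\beta C_k^2}{2\delta_k^3}, \] $h(x)=1-\frac{\lambda_1}{x}-\lambda_2x^2$, $B(u,r)=h(r/u)$, and consider the metric \[ g_{\mathrm{ext}}=-B(u,r)\,du^2-2\,du\,dr+r^2d\Omega^2,\qquad u>0,\ r>x_\Sigma u. \] Then there exists $x_*>x_\Sigma$ such that the hypersurface $r=xu$ is spacelike for $x>x_*$, null for $x=x_*$ and timelike for $x_\Sigma<x<x_*$. If $R_b<R_{\mathrm{AH}}$ and $x_{\mathrm{AH}}>x_\Sigma$ denotes the value with $h(x_{\mathrm{AH}})=0$ (the exterior apparent horizon $r=x_{\mathrm{AH}}u$), then $x_*>x_{\mathrm{AH}}$. Moreover, the curve $r=x_*u$ is an ingoing radial null geodesic (a solution of $\frac{dr}{du}=-\frac12B(u,r)$), and every solution $r(u)$ of $\frac{dr}{du}=-\frac12B(u,r)$ with $r(u_0)<x_*u_0$ for some $u_0>0$ reaches the matching surface $r=x_\Sigma u$ at some finite $u>u_0$; consequently every ingoing radial null geodesic escaping to null infinity other than $r=x_*u$ satisfies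 $r(u)>x_*u$ for all $u>0$, i.e. $r=x_*u$ is the first ingoing radial null geodesic that escapes to null infinity.
   Context: This is the exterior (outgoing Vaidya type metric with mass $M(u)=\lambda_1u/2$ and cosmological scalar field $\Lambda(u)=3\lambda_2/u^2$) of the self-similar stellar model whose interior is $-dt^2+(\delta_kt)^2\big(\frac{dR^2}{1-kR^2}+R^2d\Omega^2\big)$, with matching surface $R=R_b$ in the interior and $r=x_\Sigma u$ in the exterior. The curves $r=xu$ are the homothetic curves. $d\Omega^2=d\theta^2+\sin^2\theta\,d\psi^2$. *)

(* Defs.v *)
From Stdlib Require Import Reals Lra.
From Coquelicot Require Import Coquelicot.
Open Scope R_scope.

Definition Ck (k delta Rb : R) : R := 1 / (sqrt (1 - k * Rb ^ 2) + delta * Rb).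
Definition RAH (k delta : R) : R := 1 / sqrt (delta ^ 2 + k).
Definition xSigma (k delta Rb : R) : R := Rb * delta / Ck k delta Rb.
Definition lambda1 (k beta delta Rb : R) : R := beta * Rb ^ 3 / Ck k delta Rb.
Definition lambda2 (k beta delta Rb : R) : R :=
  beta * (Ck k delta Rb) ^ 2 / (2 * delta ^ 3).

Definition hfun (l1 l2 x : R) : R := 1 - l1 / x - l2 * x ^ 2.
Definition Bfun (l1 l2 u r : R) : R := hfun l1 l2 (r / u).

Record vec4 := mkv { vu : R; vr : R; vth : R; vps : R }.
Definition vzero : vec4 := mkv 0 0 0 0.

(* g_ext = -B du^2 - 2 du dr + r^2 (dtheta^2 + sin^2 theta dpsi^2),
   evaluated at the point (u, r, theta, _) on vectors v, w *)
Definition gext (l1 l2 u r th : R) (v w : vec4) : R :=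
  - Bfun l1 l2 u r * vu v * vu w
  - (vu v * vr w + vr v * vu w)
  + r ^ 2 * (vth v * vth w + (sin th) ^ 2 * vps v * vps w).

Definition tangent_hyp (x : R) (v : vec4) : Prop := vr v = x * vu v.

(* Causal character of the hypersurface r = x u (via its induced metric),
   at every point with u > 0 and 0 < theta < pi (regular coordinates). *)
Definition spacelike_hyp (l1 l2 x : R) : Prop :=
  forall u th, 0 < u -> 0 < th < PI ->
  forall v, tangent_hyp x v -> v <> vzero -> 0 < gext l1 l2 u (x * u) th v v.

Definition null_hyp (l1 l2 x : R) : Prop :=
  forall u th, 0 < u -> 0 < th < PI ->
  exists v, tangent_hyp x v /\ v <> vzero /\
    forall w, tangent_hyp x w -> gext l1 l2 u (x * u) th v w = 0.

Definition timelike_hyp (l1 l2 x : R) : Prop :=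
  forall u th, 0 < u -> 0 < th < PI ->
  exists v, tangent_hyp x v /\ gext l1 l2 u (x * u) th v v < 0.

(* Main.v *)
Require Import Defs.
From Stdlib Require Import Reals Lra Psatz Classical.
From Coquelicot Require Import Coquelicot.
Open Scope R_scope.


Definition Fh (l1 l2 x : R) : R := hfun l1 l2 x + 2 * x.

Lemma Fh_concave l1 l2 a x b : 0 <= l1 -> 0 <= l2 -> 0 < a -> a < x -> x < b ->
  Fh l1 l2 a * (b - x) + Fh l1 l2 b * (x - a) <= Fh l1 l2 x * (b - a).
Proof.
  intros H1 H2 Ha Hax Hxb.
  assert (E : Fh l1 l2 x * (b - a) - (Fh l1 l2 a * (b - x) + Fh l1 l2 b * (x - a))
     = (b - a) * (x - a) * (b - x) * (l2 + l1 / (a * b * x))).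
  { unfold Fh, hfun. field. repeat split; lra. }
  assert (0 <= (b - a) * (x - a) * (b - x) * (l2 + l1 / (a * b * x))).
  { apply Rmult_le_pos. apply Rmult_le_pos. apply Rmult_le_pos. all: try lra.
    apply Rplus_le_le_0_compat. lra. unfold Rdiv. apply Rmult_le_pos. lra.
    left. apply Rinv_0_lt_compat. repeat apply Rmult_lt_0_compat; lra. }
  lra.
Qed.

Lemma Fh_cont l1 l2 x : 0 < x -> continuity_pt (Fh l1 l2) x.
Proof.
  intros Hx. unfold Fh, hfun. reg. lra.
Qed.

Lemma root_exists l1 l2 xS : 0 < l1 -> 0 < l2 -> 0 < xS -> 0 < Fh l1 l2 xS ->
  exists xs, xS < xs /\ Fh l1 l2 xs = 0 /\
   (forall x, xS <= x < xs -> 0 < Fh l1 l2 x) /\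
   (forall x, xs < x -> Fh l1 l2 x < 0).
Proof.
  intros H1 H2 HS HF.
  set (P := fun x => - (x + 2 * x^2 - l1 - l2 * x^3)).
  set (X := xS + 2 + 3 / l2).
  assert (HX1 : 3 <= l2 * X).
  { unfold X. assert (l2 * (3/l2) = 3) by (field; lra).
    assert (0 < l2 * (xS + 2)) by nra. nra. }
  assert (HX2 : 2 <= X). { unfold X. assert (0 < 3 / l2) by (apply Rdiv_lt_0_compat; lra). lra. }
  assert (HG : forall x, 0 < x -> P x = - (x * Fh l1 l2 x)).
  { intros x Hx. unfold P, Fh, hfun. field. lra. }
  assert (Gc : continuity P). { unfold P. apply derivable_continuous. reg. }
  assert (PS : P xS < 0). { rewrite HG by lra. nra. }
  assert (PX : 0 < P X).
  { unfold P. assert (l2 * X^3 >= 3 * X^2) by (simpl; nra). simpl in *. nra. }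
  assert (HSX : xS < X). { unfold X. assert (0 < 3 / l2) by (apply Rdiv_lt_0_compat; lra). lra. }
  destruct (IVT P xS X Gc HSX PS PX) as [z [Hz1 Hz2]].
  assert (Hzp : 0 < z) by lra.
  assert (Fz : Fh l1 l2 z = 0).
  { rewrite HG in Hz2 by lra. nra. }
  assert (Hz3 : xS < z). { destruct Hz1 as [[?|?] _]; auto. subst. lra. }
  exists z. split; [exact Hz3|]. split; [exact Fz|]. split.
  - intros x [Hx1 Hx2]. destruct Hx1 as [Hx1|Hx1]; [|subst; lra].
    pose proof (Fh_concave l1 l2 xS x z ltac:(lra) ltac:(lra) HS Hx1 Hx2). rewrite Fz in H.
    nra.
  - intros x Hx.
    pose proof (Fh_concave l1 l2 xS z x ltac:(lra) ltac:(lra) HS Hz3 Hx). rewrite Fz in H.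
    nra.
Qed.

Lemma real_ind (P : R -> Prop) (a b : R) :
 (forall t, a <= t <= b -> (forall s, a <= s < t -> P s) -> P t) ->
 (forall t, a <= t < b -> (forall s, a <= s <= t -> P s) ->
     exists d, 0 < d /\ forall s, t < s < t + d -> P s) ->
 forall t, a <= t <= b -> P t.
Proof.
  intros H1 H2 t Ht.
  set (E := fun s => a <= s <= b /\ forall x, a <= x <= s -> P x).
  assert (Pa : P a). { apply H1; [lra|]. intros s Hs; lra. }
  assert (Ea : E a). { split; [lra|]. intros x Hx. replace x with a by lra. exact Pa. }
  assert (Eb : bound E). { exists b. intros s [Hs _]. lra. }
  destruct (completeness E Eb (ex_intro _ a Ea)) as [T [HT1 HT2]].
  assert (HaT : a <= T) by (apply HT1; exact Ea).
  assert (HTb : T <= b) by (apply HT2; intros s [Hs _]; lra).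
  assert (Hlt : forall s, a <= s < T -> P s).
  { intros s Hs. destruct (classic (exists e, E e /\ s < e)) as [[e [[He1 He2] He3]]|Hn].
    - apply He2. lra.
    - exfalso. assert (T <= s). { apply HT2. intros e He. destruct (Rle_lt_dec e s); auto.
        exfalso. apply Hn. exists e. auto. } lra. }
  assert (PT : P T) by (apply H1; [lra| exact Hlt]).
  assert (Hle : forall s, a <= s <= T -> P s).
  { intros s Hs. destruct (Req_dec s T). subst; auto. apply Hlt; lra. }
  destruct (Req_dec T b) as [HTb'|HTb'].
  - subst T. apply Hle. lra.
  - exfalso. destruct (H2 T ltac:(lra) Hle) as [d [Hd Hd2]].
    set (e := T + Rmin d (b - T) / 2).
    assert (Hm1 : 0 < Rmin d (b - T)) by (apply Rmin_pos; lra).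
    assert (Hm2 : Rmin d (b - T) <= d) by apply Rmin_l.
    assert (Hm3 : Rmin d (b - T) <= b - T) by apply Rmin_r.
    assert (E e). { unfold e; split; [lra|]. intros x Hx.
      destruct (Rle_lt_dec x T). apply Hle; lra. apply Hd2. lra. }
    assert (e <= T) by (apply HT1; auto). unfold e in *. lra.
Qed.

Lemma derive_cont f t l : is_derive f t l -> continuity_pt f t.
Proof.
  intros H. apply is_derive_Reals in H. apply derivable_continuous_pt. exists l. exact H.
Qed.

Lemma cont_eps f t : continuity_pt f t -> forall e, 0 < e ->
  exists d, 0 < d /\ forall s, Rabs (s - t) < d -> Rabs (f s - f t) < e.
Proof.
  intros Hc e He. destruct (Hc e He) as [al [Hal Hal2]].
  exists al. split; auto. intros s Hs. destruct (Req_dec s t).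
  subst. rewrite Rminus_diag, Rabs_R0; auto.
  apply (Hal2 s). split. split. exact I. auto. exact Hs.
Qed.

Lemma cont_left_le f a t c : a < t -> continuity_pt f t ->
  (forall s, a <= s < t -> f s <= c) -> f t <= c.
Proof.
  intros Hat Hc Hs. destruct (Rle_lt_dec (f t) c) as [?|Hlt]; auto. exfalso.
  destruct (cont_eps f t Hc (f t - c) ltac:(lra)) as [al [Hal Hal2]].
  set (s := t - Rmin al (t - a) / 2).
  assert (Hm1 : 0 < Rmin al (t - a)) by (apply Rmin_pos; lra).
  assert (Hm2 : Rmin al (t - a) <= al) by apply Rmin_l.
  assert (Hm3 : Rmin al (t - a) <= t - a) by apply Rmin_r.
  assert (H1 : Rabs (f s - f t) < f t - c).
  { apply Hal2. unfold s. rewrite Rabs_left; lra. }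
  assert (f s <= c) by (apply Hs; unfold s; lra).
  apply Rabs_def2 in H1. lra.
Qed.

Lemma cont_left_ge f a t c : a < t -> continuity_pt f t ->
  (forall s, a <= s < t -> c <= f s) -> c <= f t.
Proof.
  intros Hat Hc Hs.
  assert (- f t <= - c).
  { apply (cont_left_le (fun x => - f x) a t (-c) Hat).
    - apply continuity_pt_opp. exact Hc.
    - intros s Hs'. specialize (Hs s Hs'). lra. }
  lra.
Qed.

Lemma cont_persist_lt f t c : continuity_pt f t -> f t < c ->
  exists d, 0 < d /\ forall s, Rabs (s - t) < d -> f s < c.
Proof.
  intros Hc Hlt. destruct (cont_eps f t Hc (c - f t) ltac:(lra)) as [al [Hal Hal2]].
  exists al. split; auto. intros s Hs. specialize (Hal2 s Hs).
  apply Rabs_def2 in Hal2. lra.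
Qed.

Lemma cont_persist_gt f t c : continuity_pt f t -> c < f t ->
  exists d, 0 < d /\ forall s, Rabs (s - t) < d -> c < f s.
Proof.
  intros Hc Hlt. destruct (cont_persist_lt (fun x => - f x) t (- c)) as [d [Hd Hd2]].
  apply continuity_pt_opp; auto. lra.
  exists d. split; auto. intros s Hs. specialize (Hd2 s Hs). lra.
Qed.

Lemma deriv_neg_right f t l : is_derive f t l -> l < 0 ->
  exists d, 0 < d /\ forall s, t < s < t + d -> f s < f t.
Proof.
  intros H Hl. apply is_derive_Reals in H.
  destruct (H (- l) ltac:(lra)) as [[d Hd] Hd2].
  exists d. split; auto. intros s Hs.
  specialize (Hd2 (s - t) ltac:(lra) ltac:(simpl; rewrite Rabs_right; lra)).
  replace (t + (s - t)) with s in Hd2 by ring.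
  apply Rabs_def2 in Hd2. destruct Hd2 as [Ha Hb].
  assert (Hq : (f s - f t) / (s - t) < 0) by lra.
  assert (0 < s - t) by lra.
  destruct (Rlt_le_dec (f s) (f t)); auto. exfalso.
  assert (0 <= (f s - f t) / (s - t)). { apply Rdiv_le_0_compat; lra. } lra.
Qed.
Lemma id_der t : is_derive (fun u : R => u) t 1.
Proof. auto_derive; auto. Qed.

Lemma is_derive_psi r t dr c : 0 < t -> is_derive r t dr ->
  is_derive (fun u => r u / u + c * ln u) t ((dr * t - r t * 1) / t ^ 2 + c * / t).
Proof.
  intros Ht Hr.
  apply (is_derive_plus (fun u => r u / u) (fun u => c * ln u)).
  - apply (is_derive_div r (fun u => u)); auto. apply id_der. lra.
  - apply is_derive_scal. apply is_derive_ln. auto.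
Qed.

Lemma is_derive_gap r t dr c : is_derive r t dr ->
  is_derive (fun u => r u - c * u) t (dr - c * 1).
Proof.
  intros Hr.
  apply (is_derive_minus r (fun u => c * u)); auto.
  apply is_derive_scal. apply id_der.
Qed.
Lemma is_derive_eq (f : R -> R) (x l l' : R) : is_derive f x l -> l = l' -> is_derive f x l'.
Proof. intros H ->. exact H. Qed.

Lemma B_eq l1 l2 u x : Bfun l1 l2 u x = Fh l1 l2 (x / u) - 2 * (x / u).
Proof. unfold Bfun, Fh. ring. Qed.

Lemma reach l1 l2 xS xs (r : R -> R) (u0 : R) :
  0 < l1 -> 0 < l2 -> 0 < xS -> xS < xs ->
  (forall x, xS <= x < xs -> 0 < Fh l1 l2 x) ->
  0 < u0 -> xS * u0 < r u0 < xs * u0 ->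
  (forall u, u0 <= u -> (forall s, u0 <= s < u -> xS * s < r s) ->
     is_derive r u (- (1 / 2) * Bfun l1 l2 u (r u))) ->
  exists u1, u0 < u1 /\ r u1 = xS * u1.
Proof.
  intros Hl1 Hl2 HxS Hxs Fpos Hu0 [Hr1 Hr2] Hder.
  apply NNPP; intro Hn.
  assert (Hall : forall b u, u0 <= u <= b -> xS * u < r u).
  { intros b. apply real_ind.
    - intros t Ht Hs. destruct (Req_dec t u0) as [->|Hne]; [lra|].
      assert (Hd := is_derive_gap r t _ xS (Hder t ltac:(lra) Hs)).
      assert (0 <= r t - xS * t).
      { apply (cont_left_ge (fun u => r u - xS * u) u0 t 0); [lra| |].
        eapply derive_cont; eauto.
        intros s Hs'. specialize (Hs s Hs'). lra. }
      destruct (Req_dec (r t) (xS * t)); [|lra].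
      exfalso. apply Hn. exists t. split; auto. lra.
    - intros t Ht Hs.
      assert (Hd := is_derive_gap r t _ xS (Hder t ltac:(lra) ltac:(intros; apply Hs; lra))).
      destruct (cont_persist_gt (fun u => r u - xS * u) t 0 (derive_cont _ _ _ Hd))
        as [d [Hd1 Hd2]].
      { specialize (Hs t ltac:(lra)). lra. }
      exists d. split; auto. intros s Hs'. specialize (Hd2 s ltac:(rewrite Rabs_right; lra)).
      lra. }
  assert (Hall' : forall u, u0 <= u -> xS * u < r u).
  { intros u Hu. apply (Hall u). lra. }
  assert (Hder' : forall u, u0 <= u -> is_derive r u (- (1 / 2) * Bfun l1 l2 u (r u))).
  { intros u Hu. apply Hder; auto. intros s Hs. apply Hall'. lra. }
  set (y0 := r u0 / u0).
  assert (Hy0a : xS < y0). { unfold y0. apply Rmult_lt_reg_r with u0; auto.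
    field_simplify; lra. }
  assert (Hy0b : y0 < xs). { unfold y0. apply Rmult_lt_reg_r with u0; auto.
    field_simplify; lra. }
  set (m := Rmin (Fh l1 l2 xS) (Fh l1 l2 y0)).
  assert (Hm : 0 < m). { apply Rmin_pos; apply Fpos; lra. }
  assert (HmF : forall x, xS <= x <= y0 -> m <= Fh l1 l2 x).
  { intros x Hx.
    assert (m <= Fh l1 l2 xS) by apply Rmin_l.
    assert (m <= Fh l1 l2 y0) by apply Rmin_r.
    destruct (Req_dec x xS) as [->|?]; auto.
    destruct (Req_dec x y0) as [->|?]; auto.
    pose proof (Fh_concave l1 l2 xS x y0 ltac:(lra) ltac:(lra) HxS ltac:(lra) ltac:(lra)).
    nra. }
  set (psi := fun u => r u / u + (m / 4) * ln u).
  assert (Hpsi : forall t, u0 <= t ->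
     is_derive psi t ((- (1/2) * Fh l1 l2 (r t / t) + m / 4) / t)).
  { intros t Ht. unfold psi.
    eapply is_derive_eq. apply is_derive_psi; [lra|]. apply Hder'; lra.
    rewrite B_eq. field. lra. }
  assert (Q : forall b u, u0 <= u <= b -> psi u <= psi u0).
  { intros b. apply real_ind.
    - intros t Ht Hs. destruct (Req_dec t u0) as [->|Hne]; [lra|].
      apply (cont_left_le psi u0 t); [lra| |auto].
      eapply derive_cont. apply Hpsi. lra.
    - intros t Ht Hs.
      assert (Hqt := Hs t ltac:(lra)).
      assert (Hyt1 : xS < r t / t).
      { apply Rmult_lt_reg_r with t; [lra|]. field_simplify; try lra. apply Hall'. lra. }
      assert (Hln : ln u0 <= ln t).
      { destruct (Req_dec t u0) as [->|]; [lra|]. left. apply ln_increasing; lra. }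
      assert (Hyt2 : r t / t <= y0).
      { unfold psi in Hqt. fold y0 in Hqt. assert (0 <= m / 4 * (ln t - ln u0)).
        apply Rmult_le_pos; lra. nra. }
      assert (HF := HmF (r t / t) ltac:(lra)).
      destruct (deriv_neg_right psi t _ (Hpsi t ltac:(lra))) as [d [Hd1 Hd2]].
      { apply Rmult_lt_reg_r with t; [lra|]. field_simplify; lra. }
      exists d. split; auto. intros s Hs'. specialize (Hd2 s Hs'). lra. }
  set (U := u0 * exp (4 * (y0 - xS) / m + 1)).
  assert (HU : 0 < U) by (unfold U; apply Rmult_lt_0_compat; [lra|apply exp_pos]).
  assert (HlnU : ln U = ln u0 + (4 * (y0 - xS) / m + 1)).
  { unfold U. rewrite ln_mult; [|lra|apply exp_pos]. rewrite ln_exp. ring. }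
  assert (HuU : u0 <= U).
  { unfold U. assert (1 <= exp (4 * (y0 - xS) / m + 1)).
    { assert (0 < 4 * (y0 - xS) / m) by (apply Rdiv_lt_0_compat; lra).
      assert (Hq : exp 0 < exp (4 * (y0 - xS) / m + 1)) by (apply exp_increasing; lra).
      rewrite exp_0 in Hq. lra. }
    nra. }
  specialize (Q U U ltac:(lra)).
  unfold psi in Q. fold y0 in Q. rewrite HlnU in Q.
  assert (HA := Hall' U HuU).
  assert (xS < r U / U). { apply Rmult_lt_reg_r with U; [lra|]. field_simplify; lra. }
  assert (m / 4 * (4 * (y0 - xS) / m + 1) = (y0 - xS) + m / 4) by (field; lra).
  nra.
Qed.
Lemma Fh_lip l1 l2 xs y : 0 < l1 -> 0 < l2 -> 0 < xs -> Fh l1 l2 xs = 0 ->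
  xs <= y <= xs + 1 -> - Fh l1 l2 y <= l2 * (2 * xs + 1) * (y - xs).
Proof.
  intros H1 H2 H3 H4 Hy.
  assert (E : Fh l1 l2 xs - Fh l1 l2 y = (y - xs) * (-2 - l1 / (xs * y) + l2 * (xs + y))).
  { unfold Fh, hfun. field. lra. }
  assert (0 <= l1 / (xs * y)). { apply Rdiv_le_0_compat. lra. nra. }
  rewrite H4 in E. set (q := l1 / (xs * y)) in *.
  assert (0 <= (y - xs) * (2 + q)) by (apply Rmult_le_pos; lra).
  assert (0 <= (y - xs) * (l2 * (xs + 1 - y))) by (apply Rmult_le_pos; nra).
  nra.
Qed.

Lemma exp_der L c : is_derive (fun s => exp (- L * s)) c (- L * exp (- L * c)).
Proof. auto_derive; auto. ring. Qed.

Lemma above l1 l2 xS xs (r : R -> R) (a : R) :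
  0 < l1 -> 0 < l2 -> 0 < xS -> xS < xs -> Fh l1 l2 xs = 0 ->
  (forall x, xS <= x < xs -> 0 < Fh l1 l2 x) ->
  (forall x, xs < x -> Fh l1 l2 x < 0) ->
  0 <= a ->
  (forall u, a < u ->
     xS * u < r u /\ is_derive r u (- (1 / 2) * Bfun l1 l2 u (r u))) ->
  (exists u, a < u /\ r u <> xs * u) ->
  forall u, a < u -> xs * u < r u.
Proof.
  intros Hl1 Hl2 HxS Hxs Fxs Fpos Fneg Ha Hr [w [Hw1 Hw2]].
  assert (Hge : forall u, a < u -> xs * u <= r u).
  { intros u Hu. destruct (Rle_lt_dec (xs * u) (r u)) as [|Hlt]; auto. exfalso.
    destruct (reach l1 l2 xS xs r u ltac:(auto) ltac:(auto) ltac:(auto) ltac:(auto) Fpos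
       ltac:(lra)) as [u2 [Hu2 Hu3]].
    { split; auto. apply Hr; auto. }
    { intros v Hv _. apply Hr. lra. }
    destruct (Hr u2 ltac:(lra)) as [Hc _]. lra. }
  assert (Hder : forall u, a < u -> is_derive r u (- (1 / 2) * Bfun l1 l2 u (r u))).
  { intros u Hu. apply Hr; auto. }
  intros u Hu. destruct (Hge u Hu) as [|Heq]; auto. exfalso.
  set (u1 := u) in *.
  (* y is nondecreasing, so y = xs on (a, u1] *)
  assert (Hyder : forall t, a < t ->
    is_derive (fun v => r v / v + 0 * ln v) t ((- (1/2) * Fh l1 l2 (r t / t)) / t)).
  { intros t Ht. eapply is_derive_eq. apply is_derive_psi; [lra|]. apply Hder; lra.
    rewrite B_eq. field. lra. }
  assert (Hyge : forall t, a < t -> xs <= r t / t).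
  { intros t Ht. apply Rmult_le_reg_r with t; [lra|]. field_simplify; [|lra].
    specialize (Hge t Ht). lra. }
  assert (Hyd : forall t, a < t -> 0 <= (- (1/2) * Fh l1 l2 (r t / t)) / t).
  { intros t Ht. apply Rdiv_le_0_compat; [|lra].
    specialize (Hyge t Ht). destruct Hyge as [Hy|Hy].
    - specialize (Fneg _ Hy). lra.
    - rewrite <- Hy, Fxs. lra. }
  assert (Hbefore : forall t, a < t <= u1 -> r t = xs * t).
  { intros t Ht. destruct (Req_dec t u1) as [->|Hne]; [lra|].
    destruct (MVT_gen (fun v => r v / v + 0 * ln v) t u1
      (fun c => (- (1/2) * Fh l1 l2 (r c / c)) / c)) as [c [Hc1 Hc2]].
    - intros x Hx. rewrite Rmin_left, Rmax_right in Hx by lra. apply Hyder. lra.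
    - intros x Hx. rewrite Rmin_left, Rmax_right in Hx by lra.
      eapply derive_cont. apply Hyder. lra.
    - rewrite Rmin_left, Rmax_right in Hc1 by lra.
      assert (Hdc := Hyd c ltac:(lra)).
      assert (r u1 / u1 = xs) by (rewrite <- Heq; field; lra).
      assert (r t / t <= xs) by nra.
      specialize (Hyge t ltac:(lra)).
      assert (r t / t = xs) by lra.
      assert (r t = r t / t * t) by (field; lra). nra. }
  (* forward uniqueness *)
  set (K := l2 * (2 * xs + 1)).
  assert (HK : 0 < K) by (unfold K; nra).
  assert (Hafter : forall b t, u1 <= t <= b -> r t = xs * t).
  { intros b. apply real_ind.
    - intros t Ht Hs. destruct (Req_dec t u1) as [->|Hne]; [lra|].
      assert (Hd := is_derive_gap r t _ xs (Hder t ltac:(lra))).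
      assert (r t - xs * t <= 0).
      { apply (cont_left_le (fun v => r v - xs * v) u1 t 0); [lra| |].
        eapply derive_cont; eauto.
        intros s Hs'. rewrite (Hs s Hs'). lra. }
      specialize (Hge t ltac:(lra)). lra.
    - intros t Ht Hs.
      assert (Ht0 : 0 < t) by lra.
      assert (Hyc : continuity_pt (fun v => r v / v + 0 * ln v) t).
      { eapply derive_cont. apply Hyder. lra. }
      assert (Hyt : r t / t + 0 * ln t = xs).
      { rewrite (Hs t ltac:(lra)). field. lra. }
      destruct (cont_persist_lt _ t (xs + 1) Hyc ltac:(lra)) as [d [Hd1 Hd2]].
      exists d. split; auto. intros s Hs'.
      set (L := (K / 2 + 1) / t).
      set (phi := fun v => (r v - xs * v) * exp (- L * v)).
      set (dphi := fun v => (- (1 / 2) * Bfun l1 l2 v (r v) - xs * 1) * exp (- L * v)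
                      + (r v - xs * v) * (- L * exp (- L * v))).
      assert (Hphi : forall v, t <= v <= s -> is_derive phi v (dphi v)).
      { intros v Hv. unfold phi, dphi.
        apply (is_derive_mult (fun v => r v - xs * v) (fun v => exp (- L * v))).
        apply is_derive_gap. apply Hder. lra. apply exp_der.
        intros; apply Rmult_comm. }
      assert (Hdphi : forall v, t <= v <= s -> dphi v <= 0).
      { intros v Hv. unfold dphi. rewrite B_eq.
        assert (Hv0 : 0 < v) by lra.
        assert (Hyv : r v / v < xs + 1).
        { specialize (Hd2 v ltac:(rewrite Rabs_right; lra)).
          rewrite Rmult_0_l, Rplus_0_r in Hd2. exact Hd2. }
        assert (Hyv2 := Hyge v ltac:(lra)).
        assert (Hlip := Fh_lip l1 l2 xs (r v / v) Hl1 Hl2 ltac:(lra) Fxs ltac:(lra)).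
        fold K in Hlip.
        assert (Hg : 0 <= r v - xs * v) by (specialize (Hge v ltac:(lra)); lra).
        assert (Hyv3 : r v / v - xs = (r v - xs * v) / v) by (field; lra).
        assert (HE := exp_pos (- L * v)).
        assert (Hkey : - (1 / 2) * Fh l1 l2 (r v / v) + (r v / v) - xs
                       <= L * (r v - xs * v)).
        { rewrite Hyv3 in Hlip.
          assert (HLv : (K / 2 + 1) / v <= L).
          { unfold L. apply Rmult_le_compat_l. lra.
            apply Rinv_le_contravar; lra. }
          assert (HLv2 : (K/2+1)/v * (r v - xs * v) = K / 2 * ((r v - xs * v) / v) + (r v - xs * v) / v)
            by (field; lra).
          assert ((K/2+1)/v * (r v - xs * v) <= L * (r v - xs * v))
            by (apply Rmult_le_compat_r; lra).
          lra. }
        nra. }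
      assert (Hcphi : forall v, t <= v <= s -> continuity_pt phi v).
      { intros v Hv. eapply derive_cont. apply Hphi. auto. }
      destruct (MVT_gen phi t s dphi) as [c [Hc1 Hc2]].
      + intros x Hx. rewrite Rmin_left, Rmax_right in Hx by lra. apply Hphi. lra.
      + intros x Hx. rewrite Rmin_left, Rmax_right in Hx by lra. apply Hcphi. lra.
      + rewrite Rmin_left, Rmax_right in Hc1 by lra.
        assert (Hdc := Hdphi c Hc1).
        assert (phi t = 0). { unfold phi. rewrite (Hs t ltac:(lra)). ring. }
        assert (phi s <= 0) by nra.
        unfold phi in H0. assert (HE := exp_pos (- L * s)).
        assert (r s - xs * s <= 0).
        { destruct (Rle_lt_dec (r s - xs * s) 0); auto. nra. }
        specialize (Hge s ltac:(lra)). lra. }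
  apply Hw2. destruct (Rle_lt_dec w u1).
  - apply Hbefore. lra.
  - apply (Hafter w w). lra.
Qed.
Theorem mainTheorem5 (k beta delta Rb : R)
  (Hk : k = -1 \/ k = 0 \/ k = 1)
  (Hbeta : 0 < beta)
  (Hdelta : 0 < delta)
  (Hdelta_eq : delta ^ 3 + k * delta - 3 * beta / 2 = 0)
  (HRb : 0 < Rb)
  (HRb1 : k = 1 -> Rb < 1) :
  let xS := xSigma k delta Rb in
  let l1 := lambda1 k beta delta Rb in
  let l2 := lambda2 k beta delta Rb in
  exists xstar : R,
    xS < xstar /\
    (forall x, xstar < x -> spacelike_hyp l1 l2 x) /\
    null_hyp l1 l2 xstar /\
    (forall x, xS < x < xstar -> timelike_hyp l1 l2 x) /\
    (forall xAH, Rb < RAH k delta -> xS < xAH -> hfun l1 l2 xAH = 0 ->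
       xAH < xstar) /\
    (forall u, 0 < u ->
       is_derive (fun v => xstar * v) u (- (1 / 2) * Bfun l1 l2 u (xstar * u))) /\
    (forall (r : R -> R) (u0 : R), 0 < u0 ->
       xS * u0 < r u0 < xstar * u0 ->
       (forall u, u0 <= u -> (forall s, u0 <= s < u -> xS * s < r s) ->
          is_derive r u (- (1 / 2) * Bfun l1 l2 u (r u))) ->
       exists u1, u0 < u1 /\ r u1 = xS * u1) /\
    (forall (r : R -> R) (a : R), 0 <= a ->
       (forall u, a < u ->
          xS * u < r u /\ is_derive r u (- (1 / 2) * Bfun l1 l2 u (r u))) ->
       is_lim r p_infty p_infty ->
       (exists u, a < u /\ r u <> xstar * u) ->
       forall u, a < u -> xstar * u < r u).
Proof.
  intros xS l1 l2.
  assert (Hq : 0 < 1 - k * Rb ^ 2).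
  { destruct Hk as [ -> | [ -> | -> ] ]. nra. nra. specialize (HRb1 eq_refl). nra. }
  set (s := sqrt (1 - k * Rb ^ 2)).
  assert (Hs0 : 0 <= s) by apply sqrt_pos.
  assert (Hs2 : s * s = 1 - k * Rb ^ 2) by (apply sqrt_sqrt; lra).
  set (S := s + delta * Rb).
  assert (HS : 0 < S) by (unfold S; nra).
  assert (HC : Ck k delta Rb = 1 / S) by reflexivity.
  assert (ExS : xS = Rb * delta * S) by (unfold xS, xSigma; rewrite HC; field; lra).
  assert (El1 : l1 = beta * Rb ^ 3 * S) by (unfold l1, lambda1; rewrite HC; field; lra).
  assert (El2 : l2 = beta / (2 * delta ^ 3 * S ^ 2))
    by (unfold l2, lambda2; rewrite HC; field; lra).
  assert (Hl1 : 0 < l1) by (rewrite El1; apply Rmult_lt_0_compat; [|lra]; apply Rmult_lt_0_compat; [lra|]; apply pow_lt; lra).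
  assert (Hl2 : 0 < l2) by (rewrite El2; apply Rdiv_lt_0_compat; [lra|];
     apply Rmult_lt_0_compat; [apply Rmult_lt_0_compat; [lra|apply pow_lt; lra]|apply pow_lt; lra]).
  assert (HxS : 0 < xS) by (rewrite ExS; apply Rmult_lt_0_compat; [nra|lra]).
  assert (FxS : Fh l1 l2 xS = S ^ 2).
  { unfold Fh, hfun. rewrite El1, El2, ExS.
    replace beta with (2 * (delta ^ 3 + k * delta) / 3) by lra.
    field_simplify; try lra.
    unfold S.
    assert (E1 : delta * (s * s) = delta * (1 - k * Rb ^ 2)) by (rewrite Hs2; ring).
    apply (Rmult_eq_reg_r (3 * delta)); [|lra].
    unfold Rdiv. rewrite Rmult_assoc, Rinv_l, Rmult_1_r by lra.
    lra. }
  destruct (root_exists l1 l2 xS Hl1 Hl2 HxS ltac:(rewrite FxS; nra))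
    as [xs [Hxs [Fxs [Fpos Fneg]]]].
  assert (HB : forall x u, 0 < u -> Bfun l1 l2 u (x * u) = hfun l1 l2 x).
  { intros x u Hu. unfold Bfun. f_equal. field. lra. }
  exists xs. split; [exact Hxs|]. split; [|split; [|split; [|split; [|split; [|split]]]]].
  - intros x Hx u th Hu Hth v Hv Hnz.
    destruct v as [a b t p]. unfold tangent_hyp in Hv; simpl in Hv. subst b.
    unfold gext; simpl. rewrite HB by lra.
    assert (HF := Fneg x Hx). unfold Fh in HF.
    assert (Hsin := sin_gt_0 th ltac:(lra) ltac:(lra)).
    assert (Hxu : 0 < (x * u) ^ 2) by (apply pow_lt; nra).
    destruct (Req_dec a 0) as [Ha|Ha].
    + subst a.
      assert (Htp : 0 < t * t + sin th ^ 2 * p * p).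
      { destruct (Req_dec t 0) as [Ht|Ht].
        - destruct (Req_dec p 0) as [Hp|Hp].
          + exfalso. apply Hnz. subst. unfold vzero. f_equal; ring.
          + assert (0 < sin th ^ 2) by (apply pow_lt; lra).
            assert (0 < p * p) by nra. nra.
        - assert (0 < t * t) by nra.
          assert (0 <= sin th ^ 2 * p * p) by (rewrite Rmult_assoc; apply Rmult_le_pos; [apply pow2_ge_0|nra]).
          lra. }
      nra.
    + assert (0 < a * a) by nra.
      assert (0 <= t * t + sin th ^ 2 * p * p).
      { assert (0 <= sin th ^ 2 * p * p) by (rewrite Rmult_assoc; apply Rmult_le_pos; [apply pow2_ge_0|nra]).
        nra. }
      assert (0 <= (x * u) ^ 2 * (t * t + sin th ^ 2 * p * p)) by (apply Rmult_le_pos; lra).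
      assert (0 < - (hfun l1 l2 x + 2 * x) * (a * a)) by (apply Rmult_lt_0_compat; lra).
      nra.
  - intros u th Hu Hth. exists (mkv 1 xs 0 0). split; [unfold tangent_hyp; simpl; ring|].
    split. { intro H. injection H. lra. }
    intros w Hw. destruct w as [a b t p]. unfold tangent_hyp in Hw; simpl in Hw. subst b.
    unfold gext; simpl. rewrite HB by lra. unfold Fh in Fxs.
    replace (hfun l1 l2 xs) with (- 2 * xs) by lra. ring.
  - intros x Hx u th Hu Hth. exists (mkv 1 x 0 0). split; [unfold tangent_hyp; simpl; ring|].
    unfold gext; simpl. rewrite HB by lra.
    assert (HF := Fpos x ltac:(lra)). unfold Fh in HF. nra.
  - intros xAH _ HAH Hh.
    assert (HF : Fh l1 l2 xAH = 2 * xAH) by (unfold Fh; rewrite Hh; ring).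
    destruct (Rlt_le_dec xAH xs) as [|Hle]; auto. exfalso.
    destruct Hle as [Hlt|Heq].
    + specialize (Fneg _ Hlt). lra.
    + subst. lra.
  - intros u Hu. eapply is_derive_eq. apply is_derive_scal. apply id_der.
    rewrite HB by lra. unfold Fh in Fxs. lra.
  - intros r u0 Hu0 Hr Hd. apply (reach l1 l2 xS xs r u0); auto.
  - intros r a Ha Hr _ Hex. apply (above l1 l2 xS xs r a); auto.
Qed.
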